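(* Let $a:\mathcal H\to k$ be linear and define ${}^tL_a:=(a\otimes\mathrm{Id})\circ\Phi:\mathcal H_{CK}\to\mathcal H_{CK}$, and ${}^tL_{m^*a}:\mathcal H_{CK}\otimes\mathcal H_{CK}\to\mathcal H_{CK}\otimes\mathcal H_{CK}$ by ${}^tL_{m^*a}(u\otimes v)=\sum a(u_1v_1)\,u_0\otimes v_0$, where $\Phi(u)=\sum u_1\otimes u_0$, $\Phi(v)=\sum v_1\otimes v_0$. Then $$\Delta_{CK}\circ{}^tL_a={}^tL_{m^*a}\circ\Delta_{CK}.$$ In particular, if $a$ lies in the graded dual $\mathcal H^\circ$, so that $a(xy)=\sum a_1(x)a_2(y)$ for finitely many $a_1,a_2\in\mathcal H^\circ$ (the coproduct of $\mathcal H^\circ$), then $\Delta_{CK}\circ{}^tL_a=\sum({}^tL_{a_1}\otimes{}^tL_{a_2})\circ\Delta_{CK}$.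
   Context: Let $k$ be a field of characteristic $0$. Rooted trees are finite and non-planar; $\bullet$ denotes the one-vertex tree. (1) $\mathcal H$ is the free commutative $k$-algebra generated by isomorphism classes of rooted trees with at least one edge, with unit identified with $\bullet$. A subforest of a rooted tree $t$ is either the trivial subforest $\bullet$ or a nonempty set of pairwise vertex-disjoint subtrees of $t$ each with at least one edge, identified with the product of its components in $\mathcal H$; $t/s$ is the tree obtained by contracting each component of $s$ to a vertex. $\mathcal H$ is a Hopf algebra graded by number of edges, with multiplicative coproduct $\Delta(t)=\sum_s s\otimes t/s$ over subforests of $t$ (as subsets). (2) $\mathcal H_{CK}$ is the free commutative $k$-algebra on isomorphism classes of nonempty rooted trees, with unit the empty forest $\mathbf 1$ and Connes–Kreimer coproduct $\Delta_{CK}(u)=\sum v\otimes w$ over decompositions $U=V\sqcup W$ of the vertex set of the forest $u$ such that no vertex of $V$ lies strictly below (closer to a root along a root-to-vertex path) a vertex of $W$, $v,w$ being the induced forests. (3) $\Phi:\mathcal H_{CK}\to\mathcal H\otimes\mathcal H_{CK}$ is the algebra morphism with $\Phi(\mathbf 1)=\bullet\otimes\mathbf 1$ and $\Phi(t)=\sum_s s\otimes t/s$ (over subforests $s$ of $t$, $s\in\mathcal H$, $t/s\in\mathcal H_{CK}$) for each nonempty tree $t$. *)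

(* Defs.v *)
From HB Require Import structures.
From mathcomp Require Import all_boot all_order all_algebra.
Set Implicit Arguments. Unset Strict Implicit. Unset Printing Implicit Defensive.
Import GRing.Theory.

(* A rooted tree is a root with a (planar) list of child subtrees; non-planarity is
   handled by the isomorphism test [tree_iso] below. Every [tree] has >= 1 vertex. *)
Inductive tree := Node of seq tree.

Definition children (t : tree) : seq tree := let: Node cs := t in cs.

Fixpoint nedges (t : tree) : nat :=
  let: Node cs := t in sumn [seq (nedges c).+1 | c <- cs].

Definition nontriv (t : tree) : bool := 0 < nedges t.

(* Dyck-word code of a planar tree (injective) *)
Fixpoint code (t : tree) : seq bool :=
  let: Node cs := t in true :: flatten [seq code c | c <- cs] ++ [:: false].

Fixpoint lexle (s t : seq bool) : bool :=
  match s, t with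
  | [::], _ => true
  | _ :: _, [::] => false
  | a :: s', b :: t' => if a == b then lexle s' t' else ~~ a
  end.

(* canonical planar representative of the isomorphism class *)
Fixpoint canon (t : tree) : tree :=
  let: Node cs := t in
  Node (sort (fun a b => lexle (code a) (code b)) [seq canon c | c <- cs]).

Definition tree_iso (t1 t2 : tree) : bool := code (canon t1) == code (canon t2).

(* forests = monomials of the free commutative algebras *)
Definition forest := seq tree.

(* isomorphism of forests = equality of the corresponding monomials *)
Definition forest_iso (F G : forest) : bool :=
  perm_eq [seq code (canon t) | t <- F] [seq code (canon t) | t <- G].

Definition choices {A : Type} (l : seq (seq A)) : seq (seq A) :=
  foldr (fun xs acc => [seq x :: r | x <- xs, r <- acc]) [:: [::]] l.

(* A set of pairwise vertex-disjoint subtrees with >= 1 edge is the same thing as a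
   set of edges (its components); the empty edge set is the trivial subforest.
   Edges correspond to non-root vertices (edge to the parent); a marked tree records,
   at every vertex, whether the edge to its parent is selected ([keep]). *)
Inductive mtree := MNode (keep : bool) (cs : seq mtree).

Definition mkeep (m : mtree) : bool := let: MNode b _ := m in b.
Definition setkeep (b : bool) (m : mtree) : mtree := let: MNode _ cs := m in MNode b cs.

(* all edge subsets of t, each exactly once *)
Fixpoint markings (t : tree) : seq mtree :=
  let: Node cs := t in
  [seq MNode false l | l <- choices
     [seq [seq setkeep b m | b <- [:: true; false], m <- markings c] | c <- cs]].

(* the component (subtree of selected edges) hanging from the top vertex of m *)
Fixpoint comp (m : mtree) : tree :=
  let: MNode _ cs := m in
  Node (flatten [seq (let: MNode b _ := c in if b then [:: comp c] else [::]) | c <- cs]).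

(* all components of the selected edge set (the subforest s, as a monomial of H) *)
Fixpoint comps (is_top : bool) (m : mtree) : forest :=
  let: MNode _ cs := m in
  (if is_top && has mkeep cs then [:: comp m] else [::]) ++
  flatten [seq comps (~~ mkeep c) c | c <- cs].

(* t/s : contraction of all selected edges *)
Fixpoint contract (m : mtree) : tree :=
  let: MNode _ cs := m in
  Node (flatten [seq (let: MNode b _ := c in
                      if b then children (contract c) else [:: contract c]) | c <- cs]).

(* Phi(t) = sum_s s (x) t/s, as a list of pairs (monomial of H, tree of H_CK) *)
Definition PhiT (t : tree) : seq (forest * tree) :=
  [seq (comps true m, contract m) | m <- markings t].

(* Phi on monomials (forests) of H_CK, extended multiplicatively; Phi(1) = • (x) 1 *)
Definition PhiF (u : forest) : seq (forest * forest) :=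
  [seq (flatten [seq p.1 | p <- l], [seq p.2 | p <- l]) | l <- choices [seq PhiT t | t <- u]].

(* admissible decompositions V |_| W of the vertex set of a tree: pairs (v, w) with
   W upward closed (containing the root if nonempty) *)
Fixpoint cutsT (t : tree) : seq (forest * forest) :=
  let: Node cs := t in
  ([:: t], [::]) ::
  [seq (flatten [seq p.1 | p <- l], [:: Node (flatten [seq p.2 | p <- l])])
  | l <- choices [seq cutsT c | c <- cs]].

Definition DeltaF (u : forest) : seq (forest * forest) :=
  [seq (flatten [seq p.1 | p <- l], flatten [seq p.2 | p <- l])
  | l <- choices [seq cutsT t | t <- u]].

Section Algebra.
Variable k : fieldType.
Local Open Scope ring_scope.

(* elements of H_CK: finite formal k-linear combinations of forests;
   elements of H_CK (x) H_CK: formal combinations of pairs of forests *)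
Definition HCK := seq (k * forest).
Definition HCK2 := seq (k * (forest * forest)).

(* coefficient of the basis monomial (iso class of) F, resp. F (x) G *)
Definition coef1 (x : HCK) (F : forest) : k :=
  \sum_(p <- x | forest_iso p.2 F) p.1.
Definition coef2 (x : HCK2) (F G : forest) : k :=
  \sum_(p <- x | forest_iso p.2.1 F && forest_iso p.2.2 G) p.1.

(* a linear form a : H -> k is given by its values on monomials of H, i.e. on forests
   of trees with at least one edge, invariantly under isomorphism *)
Definition Hlinform := forest -> k.
Definition iso_invariant (a : Hlinform) : Prop :=
  forall F G, all nontriv F -> forest_iso F G -> a F = a G.

(* graded dual H°: a vanishes on all homogeneous components of degree > N *)
Definition in_graded_dual (a : Hlinform) : Prop :=
  iso_invariant a /\
  exists N : nat, forall F, all nontriv F -> (N < sumn [seq nedges t | t <- F])%N -> a F = 0.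

Definition DeltaCK (x : HCK) : HCK2 :=
  flatten [seq [seq (cu.1, p) | p <- DeltaF cu.2] | cu <- x].

Definition tL (a : Hlinform) (x : HCK) : HCK :=
  flatten [seq [seq (cu.1 * a p.1, p.2) | p <- PhiF cu.2] | cu <- x].

Definition tLm (a : Hlinform) (y : HCK2) : HCK2 :=
  flatten [seq [seq (c.1 * a (p.1 ++ q.1), (p.2, q.2)) | p <- PhiF c.2.1, q <- PhiF c.2.2]
          | c <- y].

Definition tLtens (a1 a2 : Hlinform) (y : HCK2) : HCK2 :=
  flatten [seq [seq (c.1 * a1 p.1 * a2 q.1, (p.2, q.2)) | p <- PhiF c.2.1, q <- PhiF c.2.2]
          | c <- y].

End Algebra.

Definition all_prop {A : Type} (P : A -> Prop) (s : seq A) : Prop :=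
  foldr (fun x acc => P x /\ acc) True s.

(* Main.v *)
Require Import Defs.
From mathcomp Require Import all_boot all_order all_algebra.
Set Implicit Arguments. Unset Strict Implicit. Unset Printing Implicit Defensive.

Lemma sumA (S T U : Type) (f : S -> T -> U) (s : seq S) (t : S -> seq T) (phi : U -> nat) :
  \sum_(z <- [seq f x y | x <- s, y <- t x]) phi z = \sum_(x <- s) \sum_(y <- t x) phi (f x y).
Proof. exact: big_allpairs_dep. Qed.

Lemma choices_nil (A : Type) : choices (@nil (seq A)) = [:: [::]].
Proof. by []. Qed.

Lemma choices_cons (A : Type) (a : seq A) l :
  choices (a :: l) = [seq x :: r | x <- a, r <- choices l].
Proof. by []. Qed.

Lemma sum_choices_cons (A : Type) (a : seq A) l (phi : seq A -> nat) :
  \sum_(z <- choices (a :: l)) phi z = \sum_(x <- a) \sum_(r <- choices l) phi (x :: r).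
Proof. by rewrite choices_cons sumA. Qed.

Lemma sum_choices_map (A B : Type) (f : A -> B) (ls : seq (seq A)) (phi : seq B -> nat) :
  \sum_(z <- choices (map (map f) ls)) phi z = \sum_(z <- choices ls) phi (map f z).
Proof.
elim: ls phi => [|a ls IH] phi; first by rewrite /= !big_cons !big_nil.
rewrite map_cons !sum_choices_cons big_map; apply: eq_bigr => x _; exact: IH.
Qed.

Lemma sum_choices_cat (A : Type) (L M : seq (seq A)) (phi : seq A -> nat) :
  \sum_(z <- choices (L ++ M)) phi z =
  \sum_(x <- choices L) \sum_(y <- choices M) phi (x ++ y).
Proof.
elim: L phi => [|a L IH] phi /=; first by rewrite big_cons big_nil addn0.
rewrite !sum_choices_cons; apply: eq_bigr => x _; exact: IH.
Qed.

Lemma sum_choices_flatten (A : Type) (Ls : seq (seq (seq A))) (phi : seq A -> nat) :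
  \sum_(z <- choices (flatten Ls)) phi z =
  \sum_(ys <- choices (map choices Ls)) phi (flatten ys).
Proof.
elim: Ls phi => [|L Ls IH] phi /=; first by rewrite !big_cons !big_nil.
rewrite sum_choices_cat sum_choices_cons; apply: eq_bigr => x _; exact: IH.
Qed.

Lemma sum_choices_dep (A B : Type) (h : A -> seq B) (As : seq (seq A))
   (phi : seq A -> seq B -> nat) :
  \sum_(l <- choices As) \sum_(ys <- choices (map h l)) phi l ys =
  \sum_(zs <- choices [seq [seq (x, y) | x <- a, y <- h x] | a <- As])
      phi (map fst zs) (map snd zs).
Proof.
elim: As phi => [|a As IH] phi; first by rewrite /= !big_cons !big_nil !addn0.
rewrite map_cons !sum_choices_cons sumA; apply: eq_bigr => x _.
rewrite (eq_bigr (fun r => \sum_(y <- h x) \sum_(ys <- choices (map h r)) phi (x :: r) (y :: ys)));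
  last by move=> r _; rewrite /= sum_choices_cons.
rewrite exchange_big /=; apply: eq_bigr => y _.
exact: (IH (fun l ys => phi (x :: l) (y :: ys))).
Qed.

Lemma sum_choices_pair (A B C : Type) (h1 : A -> seq B) (h2 : A -> seq C) (l : seq A)
   (phi : seq B -> seq C -> nat) :
  \sum_(ys <- choices (map h1 l)) \sum_(zs <- choices (map h2 l)) phi ys zs =
  \sum_(w <- choices [seq [seq (y, z) | y <- h1 x, z <- h2 x] | x <- l])
      phi (map fst w) (map snd w).
Proof.
elim: l phi => [|x l IH] phi; first by rewrite /= !big_cons !big_nil !addn0.
rewrite !map_cons !sum_choices_cons sumA; apply: eq_bigr => y _.
rewrite (eq_bigr (fun ys => \sum_(z <- h2 x) \sum_(zs <- choices (map h2 l)) phi (y :: ys) (z :: zs)));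
  last by move=> ys _; rewrite sum_choices_cons.
rewrite exchange_big /=; apply: eq_bigr => z _.
exact: (IH (fun ys zs => phi (y :: ys) (z :: zs))).
Qed.

Definition keq (X K : Type) (k : X -> K) (L R : seq X) :=
  forall phi : K -> nat, \sum_(x <- L) phi (k x) = \sum_(x <- R) phi (k x).

Fixpoint keqs (X K : Type) (k : X -> K) (ls ls' : seq (seq X)) : Prop :=
  match ls, ls' with
  | [::], [::] => True
  | a :: r, a' :: r' => keq k a a' /\ keqs k r r'
  | _, _ => False
  end.

Lemma keq_choices (X K : Type) (k : X -> K) ls ls' : keqs k ls ls' ->
  forall psi : seq K -> nat,
  \sum_(l <- choices ls) psi (map k l) = \sum_(l <- choices ls') psi (map k l).
Proof.
elim: ls ls' => [|a ls IH] [|a' ls'] //= [Ha Hl] psi.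
rewrite !sum_choices_cons.
rewrite (eq_bigr (fun x => \sum_(r <- choices ls') psi (k x :: map k r))); last first.
  move=> x _; exact: (IH _ Hl (fun r => psi (k x :: r))).
rewrite exchange_big /= [RHS]exchange_big /=; apply: eq_bigr => r _.
exact: (Ha (fun kx => psi (kx :: map k r))).
Qed.

Lemma keq_map (X Y K K' : Type) (k : X -> K) (k' : Y -> K') (g : X -> Y) (h : K -> K')
  (L R : seq X) : (forall x, k' (g x) = h (k x)) -> keq k L R -> keq k' (map g L) (map g R).
Proof.
move=> Hg HL phi; rewrite !big_map.
rewrite (eq_bigr (fun x => (phi \o h) (k x))); last by move=> x _; rewrite /= Hg.
rewrite [RHS](eq_bigr (fun x => (phi \o h) (k x))); last by move=> x _; rewrite /= Hg.
exact: HL.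
Qed.

Lemma keq_trans (X K : Type) (k : X -> K) L M R : keq k L M -> keq k M R -> keq k L R.
Proof. by move=> H1 H2 phi; rewrite H1 H2. Qed.
Lemma keq_sym (X K : Type) (k : X -> K) L M : keq k L M -> keq k M L.
Proof. by move=> H1 phi; rewrite H1. Qed.
Lemma keq_refl (X K : Type) (k : X -> K) L : keq k L L.
Proof. by []. Qed.
Lemma keq_cat (X K : Type) (k : X -> K) L1 L2 R1 R2 :
  keq k L1 R1 -> keq k L2 R2 -> keq k (L1 ++ L2) (R1 ++ R2).
Proof. by move=> H1 H2 phi; rewrite !big_cat H1 H2. Qed.

Lemma keq_perm (X : Type) (K : eqType) (k : X -> K) L R :
  keq k L R -> perm_eq (map k L) (map k R).
Proof.
move=> H; apply/permP => P; rewrite !count_map.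
have E : forall S : seq X, count (preim k P) S = \sum_(x <- S) (fun kx => nat_of_bool (P kx)) (k x).
  by elim=> [|x S IHS]; rewrite ?big_nil ?big_cons //= IHS.
by rewrite !E; apply: (H (fun kx => nat_of_bool (P kx))).
Qed.

Lemma lexle_total : total lexle.
Proof.
elim=> [|a s IH] [|b t] //=; case: a; case: b => //=; exact: IH.
Qed.

Lemma lexle_trans : transitive lexle.
Proof.
move=> y x; elim: x y => [|a s IH] [|b t] [|c u] //=.
by case: a; case: b; case: c => //=; apply: IH.
Qed.

Lemma lexle_anti : antisymmetric lexle.
Proof.
elim=> [|a s IH] [|b t] //=.
by case: a; case: b => //= /IH ->.
Qed.

Definition ssort (s : seq (seq bool)) := sort lexle s.

Lemma ssort_perm s1 s2 : perm_eq s1 s2 -> ssort s1 = ssort s2.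
Proof. move=> H; apply/(perm_sortP lexle_total lexle_trans lexle_anti); exact: H. Qed.

Lemma ssort_permP s1 s2 : ssort s1 = ssort s2 -> perm_eq s1 s2.
Proof. by move=> H; apply/(perm_sortP lexle_total lexle_trans lexle_anti). Qed.

Lemma perm_ssort s : perm_eq (ssort s) s.
Proof. by rewrite /ssort perm_sort. Qed.

Definition ckey (t : tree) := code (canon t).
Definition skey (F : forest) := ssort (map ckey F).

Lemma ckey_node F : ckey (Node F) = true :: flatten (skey F) ++ [:: false].
Proof.
rewrite /skey /ssort /=.
congr (_ :: _ ++ _); congr flatten.
rewrite (_ : [seq ckey i | i <- F] = [seq code i | i <- [seq canon c | c <- F]]);
  last by rewrite -map_comp.
by rewrite [RHS]sort_map.
Qed.

Lemma skey_cat F G : skey (F ++ G) = ssort (skey F ++ skey G).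
Proof.
apply: ssort_perm; rewrite map_cat; apply: perm_cat; rewrite perm_sym; exact: perm_ssort.
Qed.

Lemma skey_flatten Fs : skey (flatten Fs) = ssort (flatten (map skey Fs)).
Proof.
apply: ssort_perm; elim: Fs => [|F Fs IH] //=.
rewrite map_cat; apply: perm_cat => //; rewrite perm_sym; exact: perm_ssort.
Qed.

Lemma skey1 t : skey [:: t] = [:: ckey t].
Proof. by []. Qed.

Lemma skey0 : skey [::] = [::].
Proof. by []. Qed.

Lemma forest_isoE F G : forest_iso F G = (skey F == skey G).
Proof.
rewrite /forest_iso; apply/idP/eqP => [H|H]; first exact: ssort_perm.
exact: ssort_permP.
Qed.

Lemma size_skey F : size (skey F) = size F.
Proof. by rewrite /skey /ssort size_sort size_map. Qed.

Definition F3 := (forest * forest * forest)%type.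
Definition F4 := (forest * forest * forest * forest)%type.
Definition k3 (x : F3) := (skey x.1.1, skey x.1.2, skey x.2).
Definition k4 (x : F4) := (skey x.1.1.1, skey x.1.1.2, skey x.1.2, skey x.2).

Definition oth (m : mtree) := let: MNode _ cs := m in flatten [seq comps (~~ mkeep c) c | c <- cs].
Definition rcc (m : mtree) := children (Defs.comp m).
Definition pair2 (l : seq (forest * forest)) : forest * forest :=
  (flatten [seq p.1 | p <- l], flatten [seq p.2 | p <- l]).
Definition CC (T : tree) := [seq pair2 l | l <- choices [seq cutsT c | c <- children T]].

Definition Lt (t : tree) : seq F3 := [seq (p.1, q.1, q.2) | p <- PhiT t, q <- cutsT p.2].
Definition Rt (t : tree) : seq F3 :=
  flatten [seq [seq (p.1 ++ p'.1, p.2, p'.2) | p <- PhiF q.1, p' <- PhiF q.2] | q <- cutsT t].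
Definition Kt (t : tree) : seq F4 :=
  [seq (rcc m, oth m, q.1, q.2) | m <- markings t, q <- CC (contract m)].
Definition KRt (t : tree) : seq F4 :=
  flatten [seq [seq (rcc m, p.1 ++ oth m, p.2, children (contract m))
               | p <- PhiF q.1, m <- markings (Node q.2)] | q <- CC t].
Definition liftK (x : F4) : F4 := ([:: Node x.1.1.1], x.1.1.2, x.1.2, x.2).
Definition liftL (y : F3) : F4 := ([::], y.1.1, y.1.2, y.2).
Definition PL t := map liftK (Kt t) ++ map liftL (Lt t).
Definition PR t := map liftK (KRt t) ++ map liftL (Rt t).
Definition Comb (l : seq F4) : F4 :=
  (flatten [seq x.1.1.1 | x <- l], flatten [seq x.1.1.2 | x <- l],
   flatten [seq x.1.2 | x <- l], flatten [seq x.2 | x <- l]).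
Definition condN (F : forest) : forest := if F is [::] then [::] else [:: Node F].
Definition Gf (x : F4) : F3 := (condN x.1.1.1 ++ x.1.1.2, x.1.2, [:: Node x.2]).
Definition first (t : tree) : seq F3 := [seq (p.1, [:: p.2], [::]) | p <- PhiT t].

Lemma cutsT_CC T : cutsT T = ([:: T], [::]) :: [seq (p.1, [:: Node p.2]) | p <- CC T].
Proof. by case: T => cs /=; rewrite /CC -map_comp. Qed.

Lemma comp_rcc m : Defs.comp m = Node (rcc m).
Proof. by case: m. Qed.

Lemma contract_node m : contract m = Node (children (contract m)).
Proof. by case: m. Qed.

Lemma comps_true m : comps true m = condN (rcc m) ++ oth m.
Proof.
case: m => b cs /=; rewrite /rcc /=; congr (_ ++ _).
elim: cs => [|[b' cs'] cs IH] //=.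
by case: b' => //=.
Qed.

Lemma S1 t : keq k3 (Lt t) (first t ++ map Gf (Kt t)).
Proof.
move=> phi; rewrite big_cat /= /Lt /first /Kt !big_map !sumA /PhiT !big_map -big_split.
apply: eq_bigr => m _ /=; rewrite cutsT_CC big_cons big_map comps_true.
by [].
Qed.

Lemma sum_PhiF1 t (psi : forest * forest -> nat) :
  \sum_(p <- PhiF [:: t]) psi p = \sum_(x <- PhiT t) psi (x.1 ++ [::], [:: x.2]).
Proof.
rewrite /PhiF big_map map_cons sum_choices_cons; apply: eq_bigr => x _.
by rewrite /= big_cons big_nil addn0.
Qed.

Lemma skey_perm F G : perm_eq (map ckey F) (map ckey G) -> skey F = skey G.
Proof. exact: ssort_perm. Qed.

Lemma sum_flatten (X Y : Type) (f : X -> seq Y) (s : seq X) (phi : Y -> nat) :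
  \sum_(y <- flatten (map f s)) phi y = \sum_(x <- s) \sum_(y <- f x) phi y.
Proof. by rewrite big_flatten /= big_map. Qed.

Lemma S2 t : keq k3 (Rt t) (first t ++ map Gf (KRt t)).
Proof.
move=> phi; rewrite big_cat /= /Rt /first /KRt !big_map sum_flatten cutsT_CC big_cons.
congr (_ + _).
  rewrite sumA /= sum_PhiF1 /PhiT !big_map; apply: eq_bigr => m _.
  by rewrite /= big_cons big_nil addn0 /k3 /= !cats0.
rewrite sum_flatten big_map; apply: eq_bigr => q _ /=.
rewrite !sumA; apply: eq_bigr => p _.
rewrite sum_PhiF1 /PhiT big_map; apply: eq_bigr => m _.
rewrite /k3 /Gf -contract_node /=; congr (phi (_, _, _)).
apply: skey_perm; rewrite !map_cat comps_true map_cat cats0 perm_catCA //.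
Qed.

Definition combK (ks : seq (seq (seq bool) * seq (seq bool) * seq (seq bool) * seq (seq bool))) :=
  (ssort (flatten [seq x.1.1.1 | x <- ks]), ssort (flatten [seq x.1.1.2 | x <- ks]),
   ssort (flatten [seq x.1.2 | x <- ks]), ssort (flatten [seq x.2 | x <- ks])).

Lemma k4_Comb w : k4 (Comb w) = combK (map k4 w).
Proof. by rewrite /k4 /Comb /combK /= !skey_flatten -!map_comp. Qed.

Lemma keq_Comb ls ls' : keqs k4 ls ls' -> keq k4 (map Comb (choices ls)) (map Comb (choices ls')).
Proof.
move=> H phi; rewrite !big_map.
rewrite (eq_bigr (fun w => (phi \o combK) (map k4 w))); last by move=> w _; rewrite k4_Comb.
rewrite [RHS](eq_bigr (fun w => (phi \o combK) (map k4 w))); last by move=> w _; rewrite k4_Comb.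
exact: keq_choices.
Qed.

Lemma keqs_map (X Y K : Type) (k : Y -> K) (f g : X -> seq Y) (cs : seq X) :
  all_prop (fun c => keq k (f c) (g c)) cs -> keqs k (map f cs) (map g cs).
Proof. by elim: cs => [|c cs IH] //= [H1 H2]; split => //; exact: IH. Qed.

Definition gch (c : mtree) : forest := if mkeep c then children (contract c) else [:: contract c].
Definition hh (c : mtree) := choices [seq cutsT x | x <- gch c].
Definition piece (z : mtree * seq (forest * forest)) : F4 :=
  (if mkeep z.1 then [:: Defs.comp z.1] else [::], comps (~~ mkeep z.1) z.1,
   (pair2 z.2).1, (pair2 z.2).2).
Definition Opt (c : tree) := [seq setkeep b m | b <- [:: true; false], m <- markings c].

Lemma pair2_flatten (ys : seq (seq (forest * forest))) :
  pair2 (flatten ys) = pair2 (map pair2 ys).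
Proof.
rewrite /pair2 /= -!map_comp; congr (_, _); elim: ys => [|y ys IH] //=;
by rewrite map_cat flatten_cat IH.
Qed.

Lemma contract_MNode l : contract (MNode false l) = Node (flatten (map gch l)).
Proof. by rewrite /=; congr (Node (flatten _)); apply: eq_map => -[[] cs]. Qed.

Lemma rcc_MNode b l : rcc (MNode b l) =
  flatten [seq (if mkeep x then [:: Defs.comp x] else [::]) | x <- l].
Proof. by rewrite /rcc /=; congr flatten; apply: eq_map => -[[] cs]. Qed.

Lemma markings_node cs : markings (Node cs) = map (MNode false) (choices (map Opt cs)).
Proof. by []. Qed.

Lemma comb_piece zs :
  (rcc (MNode false (map fst zs)), oth (MNode false (map fst zs)),
   (pair2 (map pair2 (map snd zs))).1, (pair2 (map pair2 (map snd zs))).2) = Comb (map piece zs).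
Proof.
rewrite rcc_MNode /oth /Comb /pair2 /= -!map_comp.
by elim: zs => [|z zs IH] //=.
Qed.

Lemma S3a cs (phi : _ -> nat) :
  \sum_(x <- Kt (Node cs)) phi (k4 x) =
  \sum_(w <- choices [seq map piece [seq (x, y) | x <- Opt c, y <- hh x] | c <- cs])
     phi (k4 (Comb w)).
Proof.
rewrite /Kt sumA markings_node big_map.
rewrite (eq_bigr (fun l => \sum_(ys <- choices (map hh l))
   phi (k4 (rcc (MNode false l), oth (MNode false l),
     (pair2 (map pair2 ys)).1, (pair2 (map pair2 ys)).2)))); last first.
  move=> l _; rewrite contract_MNode /CC /= big_map map_flatten sum_choices_flatten -map_comp.
  have -> : [seq (choices \o map cutsT) i | i <- [seq gch i | i <- l]] = map hh l.
    by rewrite -map_comp.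
  by apply: eq_bigr => ys _; rewrite pair2_flatten.
rewrite sum_choices_dep.
rewrite (eq_bigr (fun zs => phi (k4 (Comb (map piece zs))))); last by move=> zs _; rewrite comb_piece.
rewrite -(sum_choices_map piece _ (fun w => phi (k4 (Comb w)))) -!map_comp; by [].
Qed.

Lemma setkeepK b m : mkeep (setkeep b m) = b. Proof. by case: m. Qed.
Lemma comps_setkeep b' b m : comps b' (setkeep b m) = comps b' m. Proof. by case: m. Qed.
Lemma comp_setkeep b m : Defs.comp (setkeep b m) = Defs.comp m. Proof. by case: m. Qed.
Lemma contract_setkeep b m : contract (setkeep b m) = contract m. Proof. by case: m. Qed.
Lemma comps_false m : comps false m = oth m. Proof. by case: m. Qed.

Lemma S3b c : keq k4 (map piece [seq (x, y) | x <- Opt c, y <- hh x]) (PL c).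
Proof.
move=> phi; rewrite big_map sumA /Opt sumA big_cons big_cons big_nil addn0.
rewrite /PL big_cat /= !big_map /Kt /Lt !sumA /PhiT big_map.
congr (_ + _); apply: eq_bigr => m _.
  rewrite /hh /gch setkeepK contract_setkeep /CC big_map.
  apply: eq_bigr => y _.
  by rewrite /piece /= setkeepK comps_setkeep comp_setkeep comps_false comp_rcc.
rewrite /hh /gch setkeepK contract_setkeep map_cons sum_choices_cons.
apply: eq_bigr => q _; rewrite /= big_cons big_nil addn0.
by rewrite /piece /k4 /= setkeepK comps_setkeep /pair2 /= !cats0.
Qed.

Lemma all_propP (X : Type) (P : X -> Prop) (s : seq X) : (forall x, P x) -> all_prop P s.
Proof. by move=> H; elim: s => //= x s IH; split. Qed.

Lemma S3 cs : keq k4 (Kt (Node cs)) (map Comb (choices (map PL cs))).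
Proof.
move=> phi; rewrite S3a big_map.
have H : keq k4 (map Comb (choices [seq map piece [seq (x, y) | x <- Opt c, y <- hh x] | c <- cs]))
  (map Comb (choices (map PL cs))).
  by apply: keq_Comb; apply: keqs_map; apply: all_propP; exact: S3b.
by move: (H phi); rewrite !big_map.
Qed.

Lemma sum_PhiF_flatten (Fs : seq forest) (psi : forest * forest -> nat) :
  \sum_(p <- PhiF (flatten Fs)) psi p = \sum_(ps <- choices (map PhiF Fs)) psi (pair2 ps).
Proof.
rewrite /PhiF big_map map_flatten sum_choices_flatten -map_comp.
pose g := fun l : seq (forest * tree) => (flatten [seq p.1 | p <- l], [seq p.2 | p <- l]).
have -> : [seq [seq (flatten [seq p.1 | p <- l], [seq p.2 | p <- l])
                        | l <- choices [seq PhiT t | t <- u]] | u <- Fs]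
   = map (map g) (map (fun u => choices (map PhiT u)) Fs) by rewrite -map_comp.
rewrite (sum_choices_map g _ (fun ps => psi (pair2 ps))).
apply: eq_bigr => ys _; congr psi; rewrite /pair2 /=.
by elim: ys => [|y ys IH] //=; rewrite !map_cat flatten_cat; case: IH => -> ->.
Qed.

Lemma sum_markings_flatten (Ws : seq forest) (psi : mtree -> nat) :
  \sum_(m <- markings (Node (flatten Ws))) psi m =
  \sum_(ms <- choices [seq choices (map Opt w) | w <- Ws]) psi (MNode false (flatten ms)).
Proof.
rewrite markings_node big_map map_flatten sum_choices_flatten -map_comp; by [].
Qed.

Definition hh2 (x : forest * forest) := [seq (y, z) | y <- PhiF x.1, z <- choices (map Opt x.2)].
Definition piece2 (z : (forest * forest) * ((forest * forest) * seq mtree)) : F4 :=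
  (rcc (MNode false z.2.2), z.2.1.1 ++ oth (MNode false z.2.2), z.2.1.2,
   children (contract (MNode false z.2.2))).

Lemma skey_flatten_cat (X : Type) (f g : X -> forest) s :
  skey (flatten (map f s) ++ flatten (map g s)) = skey (flatten (map (fun x => f x ++ g x) s)).
Proof.
apply: skey_perm; elim: s => //= x s IH; rewrite !map_cat.
by rewrite perm_catACA perm_cat2l -!map_cat.
Qed.

Lemma oth_flatten (ms : seq (seq mtree)) :
  oth (MNode false (flatten ms)) = flatten (map (fun l => oth (MNode false l)) ms).
Proof. by elim: ms => //= l ms IH; rewrite map_cat flatten_cat IH. Qed.

Lemma rcc_flatten (ms : seq (seq mtree)) :
  rcc (MNode false (flatten ms)) = flatten (map (fun l => rcc (MNode false l)) ms).
Proof. by rewrite !rcc_MNode; elim: ms => //= l ms IH; rewrite map_cat flatten_cat IH rcc_MNode. Qed.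

Lemma cc_flatten (ms : seq (seq mtree)) :
  children (contract (MNode false (flatten ms))) =
  flatten (map (fun l => children (contract (MNode false l))) ms).
Proof.
have E : forall l, children (contract (MNode false l)) = flatten (map gch l).
  by move=> l; rewrite contract_MNode.
rewrite E (@eq_map _ _ _ (fun l => flatten (map gch l)) E).
by elim: ms => //= l ms IH; rewrite map_cat flatten_cat IH.
Qed.

Lemma comb_piece2 zs :
  k4 (rcc (MNode false (flatten (map snd (map snd zs)))),
      (pair2 (map fst (map snd zs))).1 ++ oth (MNode false (flatten (map snd (map snd zs)))),
      (pair2 (map fst (map snd zs))).2,
      children (contract (MNode false (flatten (map snd (map snd zs)))))) =
  k4 (Comb (map piece2 zs)).
Proof.
rewrite /k4 /Comb rcc_flatten oth_flatten cc_flatten /pair2; cbn [fst snd].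
rewrite -!map_comp; congr (_, _, _, _).
exact: (skey_flatten_cat (fun z => z.2.1.1) (fun z => oth (MNode false z.2.2))).
Qed.

Definition Phi2 (w : seq ((forest * forest) * seq mtree)) :=
  k4 (rcc (MNode false (flatten (map snd w))),
      (pair2 (map fst w)).1 ++ oth (MNode false (flatten (map snd w))),
      (pair2 (map fst w)).2,
      children (contract (MNode false (flatten (map snd w))))).

Lemma S4a cs (phi : _ -> nat) :
  \sum_(x <- KRt (Node cs)) phi (k4 x) =
  \sum_(w <- choices [seq map piece2 [seq (x, yz) | x <- cutsT c, yz <- hh2 x] | c <- cs])
     phi (k4 (Comb w)).
Proof.
rewrite /KRt sum_flatten /CC big_map.
rewrite (eq_bigr (fun l => \sum_(w <- choices (map hh2 l)) phi (Phi2 w))); last first.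
  move=> l _; rewrite sumA /pair2; cbn [fst snd]; rewrite sum_PhiF_flatten.
  rewrite (eq_bigr (fun ps => \sum_(ms <- choices [seq choices (map Opt x.2) | x <- l])
     phi (k4 (rcc (MNode false (flatten ms)), (pair2 ps).1 ++ oth (MNode false (flatten ms)),
         (pair2 ps).2, children (contract (MNode false (flatten ms))))))); last first.
    by move=> ps _; rewrite sum_markings_flatten -map_comp.
  rewrite -map_comp.
  exact: (sum_choices_pair (fun x => PhiF x.1) (fun x => choices (map Opt x.2)) l
     (fun ps ms => phi (k4 (rcc (MNode false (flatten ms)), (pair2 ps).1 ++ oth (MNode false (flatten ms)),
         (pair2 ps).2, children (contract (MNode false (flatten ms))))))).
rewrite (sum_choices_dep hh2 _ (fun _ w => phi (Phi2 w))).
rewrite (eq_bigr (fun zs => phi (k4 (Comb (map piece2 zs))))); last first.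
  by move=> zs _; rewrite /Phi2 comb_piece2.
rewrite -(sum_choices_map piece2 _ (fun w => phi (k4 (Comb w)))) -!map_comp; by [].
Qed.
Lemma oth1 z : oth (MNode false [:: z]) = comps (~~ mkeep z) z.
Proof. by rewrite /oth /= cats0. Qed.
Lemma rcc1 z : rcc (MNode false [:: z]) = if mkeep z then [:: Defs.comp z] else [::].
Proof. by rewrite rcc_MNode /= cats0. Qed.
Lemma cc1 z : children (contract (MNode false [:: z])) = gch z.
Proof. by rewrite contract_MNode /= cats0. Qed.

Lemma S4b c : keq k4 (map piece2 [seq (x, yz) | x <- cutsT c, yz <- hh2 x]) (PR c).
Proof.
move=> phi; rewrite big_map sumA /PR big_cat /= !big_map /KRt /Rt !sum_flatten cutsT_CC !big_cons !big_map.
rewrite addnCA; congr (_ + _).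
  rewrite /hh2 !sumA; apply: eq_bigr => p _; by rewrite /= !big_cons !big_nil.
rewrite -big_split; apply: eq_bigr => j _; case: (pair2 j) => V W; cbn [fst snd].
rewrite /hh2 !sumA -big_split; apply: eq_bigr => p _.
rewrite sum_PhiF1 map_cons sum_choices_cons /Opt sumA !big_cons big_nil addn0.
rewrite /PhiT !big_map.
congr (_ + _); apply: eq_bigr => m _; rewrite big_cons big_nil addn0.
  by rewrite /piece2; cbn [fst snd]; rewrite rcc1 oth1 cc1 setkeepK comp_setkeep comps_setkeep comps_false comp_rcc /gch
    setkeepK contract_setkeep.
by rewrite /piece2; cbn [fst snd]; rewrite rcc1 oth1 cc1 setkeepK comps_setkeep /gch setkeepK contract_setkeep /k4 /= !cats0.
Qed.

Lemma S4 cs : keq k4 (KRt (Node cs)) (map Comb (choices (map PR cs))).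
Proof.
move=> phi; rewrite S4a big_map.
have H : keq k4 (map Comb (choices [seq map piece2 [seq (x, yz) | x <- cutsT c, yz <- hh2 x] | c <- cs]))
  (map Comb (choices (map PR cs))).
  by apply: keq_Comb; apply: keqs_map; apply: all_propP; exact: S4b.
by move: (H phi); rewrite !big_map.
Qed.

Fixpoint tree_ind' (P : tree -> Prop) (H : forall cs, all_prop P cs -> P (Node cs)) (t : tree) : P t :=
  match t with
  | Node cs => H cs ((fix aux (cs : seq tree) : all_prop P cs :=
                      match cs return all_prop P cs with
                      | [::] => I
                      | c :: cs' => conj (tree_ind' H c) (aux cs')
                      end) cs)
  end.

Lemma all_prop_impl (X : Type) (P Q : X -> Prop) (s : seq X) :
  (forall x, P x -> Q x) -> all_prop P s -> all_prop Q s.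
Proof. by move=> H; elim: s => //= x s IH [H1 H2]; split; [apply: H | apply: IH]. Qed.

Definition nodeK (k : seq (seq bool)) : seq bool := true :: flatten k ++ [:: false].

Lemma k4_liftK x : k4 (liftK x) =
  ([:: nodeK (k4 x).1.1.1], (k4 x).1.1.2, (k4 x).1.2, (k4 x).2).
Proof. by rewrite /k4 /liftK /= skey1 ckey_node. Qed.

Lemma k4_liftL y : k4 (liftL y) = ([::], (k3 y).1.1, (k3 y).1.2, (k3 y).2).
Proof. by []. Qed.

Lemma k3_Gf x : k3 (Gf x) =
  (ssort ((if (k4 x).1.1.1 is [::] then [::] else [:: nodeK (k4 x).1.1.1]) ++ (k4 x).1.1.2),
   (k4 x).1.2, [:: nodeK (k4 x).2]).
Proof.
rewrite /k3 /Gf /k4 /=; rewrite skey_cat skey1 ckey_node; congr (ssort (_ ++ _), _, _).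
rewrite /condN; case: x.1.1.1 => [|t F] //.
rewrite skey1 ckey_node; case E: (skey (t :: F)) => //.
by move: (size_skey (t :: F)); rewrite E.
Qed.

Lemma PL_PR c : keq k4 (Kt c) (KRt c) -> keq k3 (Lt c) (Rt c) -> keq k4 (PL c) (PR c).
Proof.
move=> HK HL; apply: keq_cat.
  exact: (keq_map (h := fun k => ([:: nodeK k.1.1.1], k.1.1.2, k.1.2, k.2)) k4_liftK HK).
exact: (keq_map (h := fun k => ([::], k.1.1, k.1.2, k.2)) k4_liftL HL).
Qed.

Lemma LR_tree t : keq k4 (Kt t) (KRt t) /\ keq k3 (Lt t) (Rt t).
Proof.
elim/tree_ind': t => cs IH.
have HK : keq k4 (Kt (Node cs)) (KRt (Node cs)).
  apply: keq_trans (S3 cs) _; apply: keq_trans (keq_sym (S4 cs)).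
  apply: keq_Comb; apply: keqs_map; apply: all_prop_impl IH => c [H1 H2].
  exact: PL_PR.
split => //.
apply: keq_trans (S1 _) _; apply: keq_trans (keq_sym (S2 _)).
apply: keq_cat => //.
exact: (keq_map (h := fun k => (ssort ((if k.1.1.1 is [::] then [::] else [:: nodeK k.1.1.1]) ++ k.1.1.2),
   k.1.2, [:: nodeK k.2])) k3_Gf HK).
Qed.

Definition Lf (u : forest) : seq F3 := [seq (p.1, q.1, q.2) | p <- PhiF u, q <- DeltaF p.2].
Definition Rf (u : forest) : seq F3 :=
  flatten [seq [seq (p.1 ++ p'.1, p.2, p'.2) | p <- PhiF q.1, p' <- PhiF q.2] | q <- DeltaF u].
Definition Comb3 (l : seq F3) : F3 :=
  (flatten [seq x.1.1 | x <- l], flatten [seq x.1.2 | x <- l], flatten [seq x.2 | x <- l]).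
Definition combK3 (ks : seq (seq (seq bool) * seq (seq bool) * seq (seq bool))) :=
  (ssort (flatten [seq x.1.1 | x <- ks]), ssort (flatten [seq x.1.2 | x <- ks]),
   ssort (flatten [seq x.2 | x <- ks])).

Lemma k3_Comb3 w : k3 (Comb3 w) = combK3 (map k3 w).
Proof. by rewrite /k3 /Comb3 /combK3 /= !skey_flatten -!map_comp. Qed.

Lemma keq_Comb3 ls ls' : keqs k3 ls ls' -> keq k3 (map Comb3 (choices ls)) (map Comb3 (choices ls')).
Proof.
move=> H phi; rewrite !big_map.
rewrite (eq_bigr (fun w => (phi \o combK3) (map k3 w))); last by move=> w _; rewrite k3_Comb3.
rewrite [RHS](eq_bigr (fun w => (phi \o combK3) (map k3 w))); last by move=> w _; rewrite k3_Comb3.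
exact: keq_choices.
Qed.

Definition tr (z : (forest * tree) * (forest * forest)) : F3 := (z.1.1, z.2.1, z.2.2).

Lemma Lf_comb u : keq k3 (Lf u) (map Comb3 (choices (map Lt u))).
Proof.
move=> phi; rewrite /Lf sumA /PhiF !big_map.
rewrite (eq_bigr (fun l => \sum_(ys <- choices (map (fun x => cutsT x.2) l))
    phi (k3 (flatten [seq p.1 | p <- l], (pair2 ys).1, (pair2 ys).2)))); last first.
  by move=> l _; rewrite /DeltaF big_map -map_comp.
rewrite (sum_choices_dep (fun x => cutsT x.2) _
   (fun l ys => phi (k3 (flatten [seq p.1 | p <- l], (pair2 ys).1, (pair2 ys).2)))).
have -> : [seq Lt t | t <- u] = map (map tr) [seq [seq (x, y) | x <- a, y <- cutsT x.2] | a <- map PhiT u].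
  by rewrite -!map_comp; apply: eq_map => t /=; rewrite /Lt /tr map_allpairs.
rewrite (sum_choices_map tr _ (fun w => phi (k3 (Comb3 w)))).
apply: eq_bigr => zs _; congr (phi (k3 _)).
by rewrite /Comb3 /pair2 /= -!map_comp.
Qed.

Definition hh3 (x : forest * forest) := [seq (y, z) | y <- PhiF x.1, z <- PhiF x.2].
Definition tr3 (z : (forest * forest) * ((forest * forest) * (forest * forest))) : F3 :=
  (z.2.1.1 ++ z.2.2.1, z.2.1.2, z.2.2.2).
Definition Rt' (t : tree) := map tr3 [seq (x, yz) | x <- cutsT t, yz <- hh3 x].

Definition Psi3 (w : seq ((forest * forest) * (forest * forest))) :=
  k3 ((pair2 (map fst w)).1 ++ (pair2 (map snd w)).1, (pair2 (map fst w)).2, (pair2 (map snd w)).2).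

Lemma Rf_comb u : keq k3 (Rf u) (map Comb3 (choices (map Rt' u))).
Proof.
move=> phi; rewrite /Rf sum_flatten /DeltaF !big_map.
rewrite (eq_bigr (fun l => \sum_(w <- choices (map hh3 l)) phi (Psi3 w))); last first.
  move=> l _; rewrite sumA /pair2; cbn [fst snd]; rewrite sum_PhiF_flatten.
  rewrite (eq_bigr (fun ps => \sum_(ps' <- choices [seq PhiF x.2 | x <- l])
     phi (k3 ((pair2 ps).1 ++ (pair2 ps').1, (pair2 ps).2, (pair2 ps').2)))); last first.
    by move=> ps _; rewrite sum_PhiF_flatten -map_comp.
  rewrite -map_comp.
  exact: (sum_choices_pair (fun x => PhiF x.1) (fun x => PhiF x.2) l
     (fun ps ps' => phi (k3 ((pair2 ps).1 ++ (pair2 ps').1, (pair2 ps).2, (pair2 ps').2)))).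
rewrite (sum_choices_dep hh3 _ (fun _ w => phi (Psi3 w))).
rewrite (eq_bigr (fun zs => phi (k3 (Comb3 (map tr3 zs))))); last first.
  move=> zs _; congr phi; rewrite /Psi3 /k3 /Comb3 /pair2; cbn [fst snd].
  rewrite -!map_comp; congr (_, _, _).
  exact: (skey_flatten_cat (fun z => z.2.1.1) (fun z => z.2.2.1)).
rewrite -(sum_choices_map tr3 _ (fun w => phi (k3 (Comb3 w)))) -!map_comp; by [].
Qed.

Lemma Rt_Rt' t : keq k3 (Rt t) (Rt' t).
Proof.
move=> phi; rewrite /Rt /Rt' sum_flatten big_map sumA; apply: eq_bigr => q _.
by rewrite /hh3 !sumA.
Qed.

Lemma LfRf u : keq k3 (Lf u) (Rf u).
Proof.
apply: keq_trans (Lf_comb u) _; apply: keq_trans (keq_sym (Rf_comb u)).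
apply: keq_Comb3; apply: keqs_map; apply: all_propP => t.
apply: keq_trans (Rt_Rt' t); exact: (LR_tree t).2.
Qed.

Fixpoint mtree_ind' (P : mtree -> Prop) (H : forall b cs, all_prop P cs -> P (MNode b cs)) (m : mtree) : P m :=
  match m with
  | MNode b cs => H b cs ((fix aux (cs : seq mtree) : all_prop P cs :=
                      match cs return all_prop P cs with
                      | [::] => I
                      | c :: cs' => conj (mtree_ind' H c) (aux cs')
                      end) cs)
  end.

Lemma all_flatten (X : Type) (a : pred X) (ss : seq (seq X)) : all a (flatten ss) = all (all a) ss.
Proof. by elim: ss => //= s ss IH; rewrite all_cat IH. Qed.

Lemma nontriv_node F : nontriv (Node F) = (0 < size F).
Proof. by case: F. Qed.

Lemma comps_nontriv m : forall b, all nontriv (comps b m).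
Proof.
elim/mtree_ind': m => b0 cs IH b /=; rewrite all_cat; apply/andP; split.
  case: ifP => //= /andP[_ Hh]; rewrite andbT nontriv_node.
  elim: cs Hh {IH} => //= -[[] cs'] cs IH //=.
by rewrite all_flatten all_map; elim: cs IH => //= c cs IH [H1 H2]; rewrite H1 IH.
Qed.

Lemma allT (X : Type) (P : pred X) (s : seq X) : (forall x, P x) -> all P s.
Proof. by move=> H; elim: s => //= x s ->; rewrite H. Qed.

Lemma PhiT_nontriv t : all (fun p => all nontriv p.1) (PhiT t).
Proof. by rewrite /PhiT all_map; apply: allT => m; exact: comps_nontriv. Qed.

Lemma all_choices (X : Type) (Q : pred X) (ls : seq (seq X)) :
  all_prop (fun a => all Q a) ls -> all (all Q) (choices ls).
Proof.
elim: ls => [|a ls IH] //= [Ha Hl].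
rewrite all_flatten all_map; elim: a Ha => //= x a IHa /andP[Hx Ha].
rewrite IHa // andbT all_map; move: (IH Hl); apply: sub_all => r /= ->.
by rewrite Hx.
Qed.

Lemma PhiF_nontriv u : all (fun p => all nontriv p.1) (PhiF u).
Proof.
rewrite /PhiF all_map.
have : all (all (fun p : forest * tree => all nontriv p.1)) (choices [seq PhiT t | t <- u]).
  apply: all_choices; elim: u => //= t u IH; split => //; exact: PhiT_nontriv.
apply: sub_all => l /=; rewrite all_flatten all_map; by [].
Qed.

Lemma Lf_nontriv u : all (fun t : F3 => all nontriv t.1.1) (Lf u).
Proof.
rewrite /Lf all_flatten all_map; move: (PhiF_nontriv u); apply: sub_all => p /= H.
by rewrite all_map; apply: allT.
Qed.

Lemma Rf_nontriv u : all (fun t : F3 => all nontriv t.1.1) (Rf u).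
Proof.
rewrite /Rf all_flatten all_map; apply: allT => q /=.
rewrite all_flatten all_map; move: (PhiF_nontriv q.1); apply: sub_all => p /= H.
rewrite all_map; move: (PhiF_nontriv q.2); apply: sub_all => p' /= H'.
by rewrite all_cat H H'.
Qed.

Section Fin.
Variable R : nmodType.
Local Open Scope ring_scope.

Lemma eq_big_all (X : Type) (P : pred X) (L : seq X) (f g : X -> R) :
  all P L -> (forall x, P x -> f x = g x) -> \sum_(x <- L) f x = \sum_(x <- L) g x.
Proof.
move=> HL H; elim: L HL => [|x L IH] /=; first by rewrite !big_nil.
by case/andP=> Hx HL; rewrite !big_cons H // IH.
Qed.

Lemma keq_sum (X : Type) (K : eqType) (k : X -> K) (P : pred X) (w : X -> R) (x0 : X) L1 L2 :
  keq k L1 L2 -> all P L1 -> all P L2 ->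
  (forall x y, P x -> P y -> k x = k y -> w x = w y) ->
  \sum_(x <- L1) w x = \sum_(x <- L2) w x.
Proof.
move=> HK H1 H2 Hw.
pose S := L1 ++ L2.
pose psi := fun kx => w (nth x0 S (index kx (map k S))).
have HS : all P S by rewrite all_cat H1 H2.
have Hpsi : forall x, P x -> k x \in map k S -> w x = psi (k x).
  move=> x Px Hin; rewrite /psi.
  have Hi : (index (k x) (map k S) < size S)%N by rewrite -(size_map k) index_mem.
  apply: Hw => //; first by move/all_nthP: HS; apply.
  by rewrite -(nth_map x0 (k x0)) // nth_index.
have Hmem : forall L M, all (fun x => k x \in map k (L ++ M)) L.
  elim=> //= x L IH M; rewrite inE eqxx /=; move: (IH M); apply: sub_all => y /=.
  by rewrite inE => ->; rewrite orbT.
have E1 : \sum_(x <- L1) w x = \sum_(x <- L1) psi (k x).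
  apply: (eq_big_all (P := fun x => P x && (k x \in map k S))).
    by rewrite all_predI H1 (Hmem L1 L2).
  by move=> x /andP[Px Hin]; apply: Hpsi.
have E2 : \sum_(x <- L2) w x = \sum_(x <- L2) psi (k x).
  apply: (eq_big_all (P := fun x => P x && (k x \in map k S))).
    rewrite all_predI H2 /=.
    have := Hmem L2 L1; apply: sub_all => y; rewrite /S !map_cat !mem_cat orbC; by [].
  by move=> x /andP[Px Hin]; apply: Hpsi.
rewrite E1 E2 -(big_map k xpredT psi) -[RHS](big_map k xpredT psi).
apply: perm_big; exact: keq_perm.
Qed.
End Fin.

Import GRing.Theory.
Local Open Scope ring_scope.

Lemma part1 (k : fieldType) (a : Hlinform k) : iso_invariant a ->
  forall x F G, coef2 (DeltaCK (tL a x)) F G = coef2 (tLm a (DeltaCK x)) F G.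
Proof.
move=> Ha x F G.
pose W (c : k) (t : F3) := if forest_iso t.1.2 F && forest_iso t.2 G then c * a t.1.1 else 0.
have EL : coef2 (DeltaCK (tL a x)) F G = \sum_(cu <- x) \sum_(t <- Lf cu.2) W cu.1 t.
  rewrite /coef2 big_mkcond /DeltaCK /tL big_flatten /= big_map big_flatten /= big_map.
  apply: eq_bigr => cu _; rewrite big_map /Lf big_allpairs_dep; apply: eq_bigr => p _.
  by rewrite big_map; apply: eq_bigr => q _.
have ER : coef2 (tLm a (DeltaCK x)) F G = \sum_(cu <- x) \sum_(t <- Rf cu.2) W cu.1 t.
  rewrite /coef2 big_mkcond /DeltaCK /tLm big_flatten /= big_map big_flatten /= big_map.
  apply: eq_bigr => cu _; rewrite big_map /Rf big_flatten /= [RHS]big_map; apply: eq_bigr => q _.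
  by rewrite !big_allpairs_dep; apply: eq_bigr => p _; apply: eq_bigr => p' _.
rewrite EL ER; apply: eq_bigr => cu _.
apply: (keq_sum (k := k3) (P := fun t : F3 => all nontriv t.1.1) ([::], [::], [::]) (LfRf cu.2)).
- exact: Lf_nontriv.
- exact: Rf_nontriv.
move=> s t Hs Ht; rewrite /k3 /W => -[E1 E2 E3].
rewrite !forest_isoE E2 E3; case: ifP => // _; congr (_ * _).
by apply: Ha => //; rewrite forest_isoE E1.
Qed.

Lemma part2 (k : fieldType) (a : Hlinform k) (A : seq (Hlinform k * Hlinform k)) :
  (forall X Y : forest, all nontriv X -> all nontriv Y ->
        a (X ++ Y) = \sum_(p <- A) p.1 X * p.2 Y) ->
  forall y F G, coef2 (tLm a y) F G = coef2 (flatten [seq tLtens p.1 p.2 y | p <- A]) F G.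
Proof.
move=> Ha y F G.
rewrite /coef2 !big_mkcond big_flatten /= big_map /tLm big_flatten /= big_map.
under [RHS]eq_bigr => pa _ do rewrite /tLtens big_flatten /= big_map.
rewrite [RHS]exchange_big /=; apply: eq_bigr => c _.
rewrite big_allpairs_dep.
under [RHS]eq_bigr => pa _ do rewrite big_mkcond big_allpairs_dep.
rewrite [RHS]exchange_big /=.
apply: (eq_big_all (PhiF_nontriv c.2.1)) => p Hp.
rewrite [RHS]exchange_big /=.
apply: (eq_big_all (PhiF_nontriv c.2.2)) => q Hq.
case: ifP => _; last by rewrite big1.
by rewrite Ha // big_distrr; apply: eq_bigr => pa _; rewrite -mulrA.
Qed.


Unset Implicit Arguments. Set Strict Implicit.
Theorem mainTheorem5 (k : fieldType) (chark : [pchar k] =i pred0) :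
  (forall (a : Hlinform k), iso_invariant a ->
     forall (x : HCK k) (F G : forest),
       coef2 (DeltaCK (tL a x)) F G = coef2 (tLm a (DeltaCK x)) F G)
  /\
  (forall (a : Hlinform k) (A : seq (Hlinform k * Hlinform k)),
     in_graded_dual a ->
     all_prop (fun p => in_graded_dual p.1 /\ in_graded_dual p.2) A ->
     (forall X Y : forest, all nontriv X -> all nontriv Y ->
        a (X ++ Y) = \sum_(p <- A) p.1 X * p.2 Y) ->
     forall (x : HCK k) (F G : forest),
       coef2 (DeltaCK (tL a x)) F G
       = coef2 (flatten [seq tLtens p.1 p.2 (DeltaCK x) | p <- A]) F G).
Proof.
split; first exact: part1.
move=> a A [Ha _] _ HA x F G.
rewrite part1 //; exact: part2.
Qed.
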